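(* Let $t$ be a positive integer and let $G=K(n_1,\dots,n_s)$ be a complete $s$-partite graph. If $n_j\ge 2t$ for each $j=1,\dots,s$, then $\chi_t(G)=s$.
   Context: $K(n_1,\dots,n_s)$ denotes the complete $s$-partite graph whose parts have $n_1,\dots,n_s$ vertices. A map $f:V(G)\to\{1,\dots,k\}$ is a $t$-relaxed $k$-coloring if every vertex $u$ has at most $t$ neighbors $v$ with $f(v)=f(u)$; $\chi_t(G)$ is the minimum $k$ for which such a coloring exists. *)

(* Defs.v *)
From mathcomp Require Import all_boot.
Set Implicit Arguments. Unset Strict Implicit. Unset Printing Implicit Defensive.

(* A simple graph on a finite vertex type T is given by its adjacency relation
   adj (assumed symmetric and irreflexive where relevant). *)

Definition relaxed_coloring (T : finType) (adj : rel T) (t k : nat)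
  (f : T -> 'I_k) : Prop :=
  forall u : T, #|[set v | adj u v & f v == f u]| <= t.

Definition relaxed_colorable (T : finType) (adj : rel T) (t k : nat) : Prop :=
  exists f : T -> 'I_k, relaxed_coloring adj t f.

Definition relaxed_chromatic_number_is (T : finType) (adj : rel T) (t k : nat)
  : Prop :=
  relaxed_colorable adj t k /\
  forall k', relaxed_colorable adj t k' -> k <= k'.

(* Complete s-partite graph K(n_1,...,n_s): vertices are pairs (j, x) with
   j a part index and x : 'I_(n j); two vertices are adjacent iff they lie
   in different parts. *)
Definition Kvert (s : nat) (n : 'I_s -> nat) : finType :=
  {j : 'I_s & 'I_(n j)}.

Definition Kadj (s : nat) (n : 'I_s -> nat) : rel (Kvert n) :=
  fun u v => tag u != tag v.

(* Main.v *)
Require Import Defs.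
From mathcomp Require Import all_boot.
From mathcomp Require Import zify.
Set Implicit Arguments. Unset Strict Implicit. Unset Printing Implicit Defensive.

Lemma card_part (s : nat) (n : 'I_s -> nat) (j : 'I_s) :
  #|[set v : Kvert n | tag v == j]| = n j.
Proof.
have -> : [set v : Kvert n | tag v == j] = (fun x : 'I_(n j) => Tagged (fun j => 'I_(n j)) x) @: [set: 'I_(n j)].
  apply/setP => v; rewrite inE; apply/idP/imsetP.
  - case: v => /= j' x /eqP E; subst j'. by exists x; rewrite ?inE.
  - by case=> x _ ->.
rewrite card_imset ?cardsT ?card_ord //.
move=> x y /= E. exact: (eq_from_Tagged E).
Qed.

Theorem corollary2p3 (t s : nat) (n : 'I_s -> nat) :
  0 < t ->
  (forall j : 'I_s, 2 * t <= n j) ->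
  relaxed_chromatic_number_is (@Kadj s n) t s.
Proof.
move=> tpos hn; split.
  exists (fun v => tag v) => u.
  rewrite (_ : [set v | _] = set0) ?cards0 //.
  by apply/setP => v; rewrite !inE /Kadj eq_sym; case: (tag v == tag u).
move=> k [f hf].
pose single (c : 'I_k) := [forall u, forall v, ((f u == c) && (f v == c)) ==> (tag u == tag v)].
pose S := [set c | single c].
pose good := [set j : 'I_s | [exists v, (tag v == j) && single (f v)]].
have Hgood : #|good| <= #|S|.
  pose h := fun c => omap (fun v : Kvert n => tag v) [pick v | f v == c].
  have sub : Some @: good \subset h @: S.
    apply/subsetP => o /imsetP [j]; rewrite inE => /existsP [v /andP [/eqP tj sv]] ->.
    apply/imsetP; exists (f v); first by rewrite inE.
    rewrite /h; case: pickP => [w /eqP fw | /(_ v)]; last by rewrite eqxx.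
    move/forallP: sv => /(_ w) /forallP /(_ v); rewrite fw !eqxx /= => /eqP ->.
    by rewrite tj.
  rewrite -(card_imset good (@Some_inj _)).
  exact: leq_trans (subset_leq_card sub) (leq_imset_card _ _).
have HB : #|~: good| <= #|~: S|.
  pose VB := [set v : Kvert n | tag v \in ~: good].
  pose VM := [set v : Kvert n | f v \in ~: S].
  have e1 : #|VB| = \sum_(j in ~: good) n j.
    rewrite -sum1_card (partition_big (fun v : Kvert n => tag v) (mem (~: good))) /=; last by move=> v; rewrite inE.
    apply: eq_bigr => j jB; rewrite -(card_part n j) -sum1_card.
    apply: eq_bigl => v; rewrite !inE.
    by case E: (tag v == j); rewrite ?andbT ?andbF //; move/eqP: E => ->; move: jB; rewrite !inE.
  have e2 : #|VM| = \sum_(c in ~: S) #|[set v | f v == c]|.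
    rewrite -sum1_card (partition_big f (mem (~: S))) /=; last by move=> v; rewrite inE.
    apply: eq_bigr => c cM; rewrite -sum1_card.
    apply: eq_bigl => v; rewrite !inE.
    by case E: (f v == c); rewrite ?andbT ?andbF //; move/eqP: E => ->; move: cM; rewrite !inE.
  have l1 : 2 * t * #|~: good| <= #|VB|.
    rewrite e1 mulnC -sum_nat_const; exact: leq_sum.
  have l2 : #|VM| <= 2 * t * #|~: S|.
    rewrite e2 mulnC -sum_nat_const; apply: leq_sum => c; rewrite !inE => /forallPn [u] /forallPn [w].
    rewrite negb_imply => /andP [/andP [/eqP fu /eqP fw] tuw].
    have sub : [set v | f v == c] \subset
      [set v | Kadj u v & f v == f u] :|: [set v | Kadj w v & f v == f w].
      apply/subsetP => v; rewrite !inE /Kadj fu fw => ->; rewrite !andbT.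
      case: (eqVneq (tag u) (tag v)) => //= E.
      by rewrite -E eq_sym.
    apply: leq_trans (subset_leq_card sub) _.
    apply: leq_trans (leq_card_setU _ _) _.
    have := hf u; have := hf w; lia.
  have sub : VB \subset VM.
    apply/subsetP => v; rewrite !inE => /existsPn /(_ v).
    by rewrite eqxx.
  have := subset_leq_card sub.
  move=> le; have : 2 * t * #|~: good| <= 2 * t * #|~: S| by apply: leq_trans l1 (leq_trans le l2).
  by rewrite leq_pmul2l ?muln_gt0 ?tpos.
have := cardsC good; have := cardsC S; rewrite !card_ord.
lia.
Qed.
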